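(* Let $m,n$ be positive integers with $n$ odd, and let $a_k,b_k\in\mathbb{Z}$ for $k=0,1,\ldots,m$ with $a_0+b_0=0$. Then, for a variable $x$, $$\det\left[x+\tan\pi\frac{a_j+b_k}n\right]_{0\le j,k\le m}-\det\left[\tan\pi\frac{a_j+b_k}n\right]_{0\le j,k\le m}=x\det\left[\tan\pi\frac{a_j+b_k}n\right]_{1\le j,k\le m}\times\prod_{k=1}^m\left(\tan\pi\frac{a_k+b_0}n\times\tan\pi\frac{a_0+b_k}n\right).$$ *)

(* Defs.v *)
From HB Require Import structures.
From mathcomp Require Import all_boot all_order all_algebra.
From mathcomp Require Import all_classical all_reals all_analysis.
Set Implicit Arguments. Unset Strict Implicit. Unset Printing Implicit Defensive.
Import Order.TTheory GRing.Theory Num.Theory.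
Local Open Scope ring_scope.

Definition tan_pi_frac (R : realType) (n : nat) (t : int) : R :=
  tan (pi * (t%:~R / n%:R)).

(* Main.v *)
Require Import Defs.
From HB Require Import structures.
From mathcomp Require Import all_boot all_order all_algebra.
From mathcomp Require Import all_classical all_reals all_analysis.
From mathcomp Require Import ring lra.
Import Order.TTheory GRing.Theory Num.Theory.
Local Open Scope ring_scope.
Section Trig.
Variable R : realType.

Lemma cos_sum_diff (a b : R) : cos (a + b) = 2 * cos a * cos b - cos (a - b).
Proof. rewrite !cosD cosN sinN; ring. Qed.

Lemma cos_odd_mult (y : R) : cos y = 0 -> forall j, cos (y *+ (j.*2.+1)) = 0.
Proof.
move=> cy; elim=> [|j IH]; first by rewrite mulr1n.
have -> : y *+ (j.+1).*2.+1 = y *+ (j.*2.+2) + y by rewrite doubleS -mulrSr.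
rewrite cos_sum_diff cy mulr0 sub0r.
have -> : y *+ j.*2.+2 - y = y *+ j.*2.+1 by rewrite mulrSr addrK.
by rewrite IH oppr0.
Qed.

Lemma cos_pi_nat (k : nat) : cos (pi *+ k) ^+ 2 = 1 :> R.
Proof.
elim: k => [|k IH]; first by rewrite mulr0n cos0 expr1n.
by rewrite mulrSr cosDpi sqrrN.
Qed.

Lemma cos_pi_int (t : int) : cos (pi * t%:~R) != 0 :> R.
Proof.
have H : cos (pi * t%:~R) ^+ 2 = 1 :> R.
  case: t => k; first by rewrite mulr_natr cos_pi_nat.
  by rewrite NegzE mulrNz mulrN cosN mulr_natr cos_pi_nat.
by apply/eqP => c0; move: H; rewrite c0 expr0n /= => /eqP; rewrite eq_sym oner_eq0.
Qed.

Lemma cos_frac_neq0 (n : nat) (t : int) : odd n ->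
  cos (pi * (t%:~R / n%:R)) != 0 :> R.
Proof.
move=> hodd; apply/eqP => c0.
have := @cos_odd_mult _ c0 n./2.
have -> : ((n./2).*2.+1 = n)%N by rewrite -[RHS](odd_double_half n) hodd add1n.
have n0 : n%:R != 0 :> R by rewrite pnatr_eq0; apply/eqP => n0; move: hodd; rewrite n0.
idtac.
rewrite -[_ *+ n]mulr_natr.
rewrite -mulrA divfK // => /eqP; apply/negP; exact: cos_pi_int.
Qed.

Lemma tan_add_id (A B : R) : cos A != 0 -> cos B != 0 -> cos (A + B) != 0 ->
  tan (A + B) - tan A - tan B = tan A * tan B * tan (A + B).
Proof.
move=> hA hB hC; rewrite /tan; move: hC; rewrite sinD cosD => hC.
by field; rewrite hA hB hC.
Qed.

Lemma tpf_id (n : nat) (s t u : int) : odd n -> u = s + t ->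
  tan_pi_frac R n u - tan_pi_frac R n s - tan_pi_frac R n t =
  tan_pi_frac R n s * tan_pi_frac R n t * tan_pi_frac R n u.
Proof.
move=> hodd hu; rewrite /tan_pi_frac.
have -> : pi * (u%:~R / n%:R) = pi * (s%:~R / n%:R) + pi * (t%:~R / n%:R) :> R.
  by rewrite hu intrD; ring.
apply: tan_add_id; rewrite -?mulrDr -?mulrDl -?intrD; exact: cos_frac_neq0.
Qed.
End Trig.
Section Mx.
Variable F : comRingType.
Variable m : nat.

Definition cvec : 'cV[F]_(m.+1) := \col_i (i != ord0)%:R.
Definition Emx : 'M[F]_(m.+1) := 1%:M - cvec *m delta_mx 0 0.

Definition Qof (P : 'M[F]_(m.+1)) : 'M[F]_(m.+1) :=
  \matrix_(i, j) (P i j - cvec i 0 * P 0 j - cvec j 0 * (P i 0 - cvec i 0 * P 0 0)).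

Lemma cr_entry n (u : 'cV[F]_n) (v : 'rV[F]_n) i j : (u *m v) i j = u i 0 * v 0 j.
Proof. by rewrite mxE big_ord1. Qed.

Lemma EPE (P : 'M[F]_(m.+1)) : Emx *m P *m Emx^T = Qof P.
Proof.
rewrite /Emx mulmxBl mul1mx -mulmxA -rowE.
rewrite linearB /= trmx1 trmx_mul trmx_delta mulmxBr mulmx1 mulmxA -colE.
apply/matrixP => i j. rewrite !mxE !big_ord1 !mxE big_ord1 !mxE. ring.
Qed.

Lemma detE : \det Emx = 1.
Proof.
rewrite det_trig; last first.
  apply/is_trig_mxP => i j lij; rewrite !mxE big_ord1 !mxE.
  have -> : (i == j) = false by apply/negbTE; rewrite neq_ltn lij.
  have -> : (j == ord0) = false by apply/negbTE; apply/eqP => j0; move: lij; rewrite j0.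
  by rewrite mulr0 subr0.
apply: big1 => i _; rewrite !mxE big_ord1 !mxE eqxx.
by case: i => [[|k] hk]; rewrite /= ?mul0r ?mulr0 subr0.
Qed.

Lemma det_Q P : \det (Qof P) = \det P.
Proof. by rewrite -EPE !det_mulmx det_tr detE mul1r mulr1. Qed.

Lemma det_add00 (A : 'M[F]_(m.+1)) x :
  \det (A + x *: delta_mx 0 0) = \det A + x * cofactor A 0 0.
Proof.
rewrite !(expand_det_row _ 0).
have Hc : forall j, cofactor (A + x *: delta_mx 0 0) 0 j = cofactor A 0 j.
  move=> j; rewrite /cofactor; congr (_ * \det _); apply/matrixP => k l.
  by rewrite !mxE lift_eqF /= mulr0 addr0.
rewrite (eq_bigr (fun j => A 0 j * cofactor A 0 j + (x * (j == 0)%:R) * cofactor A 0 j)); last first.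
  by move=> j _; rewrite Hc !mxE eqxx /= mulrDl.
rewrite big_split /=; congr (_ + _).
rewrite (bigD1 0) //= mulr1 big1 ?addr0 // => j /negbTE ->.
by rewrite mulr0 mul0r.
Qed.

Lemma det_addJ (M : 'M[F]_(m.+1)) x :
  \det (\matrix_(j, k) (x + M j k)) - \det M =
  x * \det (\matrix_(j < m, k < m) (M (lift 0 j) (lift 0 k) - M 0 (lift 0 k)
                                   - M (lift 0 j) 0 + M 0 0)).
Proof.
rewrite -det_Q -(det_Q M).
have -> : Qof (\matrix_(j, k) (x + M j k)) = Qof M + x *: delta_mx 0 0.
  apply/matrixP => i j; rewrite !mxE.
  case: (i =P 0) => [->|/eqP ni]; case: (j =P 0) => [->|/eqP nj];
    rewrite ?eqxx ?(negbTE ni) ?(negbTE nj) /=; ring.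
rewrite det_add00 addrAC subrr add0r; congr (_ * _).
rewrite /cofactor addn0 expr0 mul1r; congr (\det _); apply/matrixP => j k.
rewrite !mxE /=. ring.
Qed.
End Mx.

Lemma det_addJf (F : comRingType) m (f : 'I_m.+1 -> 'I_m.+1 -> F) x :
  \det (\matrix_(j, k) (x + f j k)) - \det (\matrix_(j, k) f j k) =
  x * \det (\matrix_(j < m, k < m) (f (lift 0 j) (lift 0 k) - f 0 (lift 0 k)
                                   - f (lift 0 j) 0 + f 0 0)).
Proof.
have := @det_addJ F m (\matrix_(j, k) f j k) x.
have -> : \matrix_(j, k) (x + (\matrix_(j, k) f j k) j k) = \matrix_(j, k) (x + f j k).
  by apply/matrixP => j k; rewrite !mxE.
move=> ->; congr (_ * \det _); apply/matrixP => j k; by rewrite !mxE.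
Qed.

Theorem lemma4p2 (R : realType) (m n : nat) (a b : 'I_m.+1 -> int)
  (hm : (0 < m)%N) (hn : (0 < n)%N) (hodd : odd n)
  (hab : a ord0 + b ord0 = 0) (x : R) :
  \det (\matrix_(j < m.+1, k < m.+1) (x + tan_pi_frac R n (a j + b k)))
  - \det (\matrix_(j < m.+1, k < m.+1) (tan_pi_frac R n (a j + b k)))
  = x * \det (\matrix_(j < m, k < m)
                (tan_pi_frac R n (a (lift ord0 j) + b (lift ord0 k))))
    * \prod_(k < m) (tan_pi_frac R n (a (lift ord0 k) + b ord0)
                     * tan_pi_frac R n (a ord0 + b (lift ord0 k))).
Proof.
rewrite (@det_addJf _ _ (fun j k => tan_pi_frac R n (a j + b k))) /=.
set G := \matrix_(j < m, k < m) tan_pi_frac R n (a (lift ord0 j) + b (lift ord0 k)).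
set u : 'rV[R]_m := \row_k tan_pi_frac R n (a (lift ord0 k) + b ord0).
set v : 'rV[R]_m := \row_k tan_pi_frac R n (a ord0 + b (lift ord0 k)).
have -> : \matrix_(j < m, k < m)
   (tan_pi_frac R n (a (lift 0 j) + b (lift 0 k)) - tan_pi_frac R n (a 0 + b (lift 0 k)) -
    tan_pi_frac R n (a (lift 0 j) + b 0) + tan_pi_frac R n (a 0 + b 0))
   = diag_mx u *m G *m diag_mx v.
  rewrite mul_diag_mx mul_mx_diag; apply/matrixP => j k; rewrite !mxE.
  have -> : tan_pi_frac R n (a 0 + b 0) = 0.
    by rewrite hab /tan_pi_frac mul0r mulr0 tan0.
  rewrite addr0 -addrA [_ + - _]addrC addrA tpf_id //; first ring.
  have hab' : a 0 + b 0 = 0 := hab. by rewrite -[LHS]addr0 -hab'; ring.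
rewrite !det_mulmx !det_diag big_split /=.
under eq_bigr do rewrite mxE. under [\prod_(i < m) v 0 i]eq_bigr do rewrite mxE. ring.
Qed.
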